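(* Let $\Sigma$ be a set, $1\le p<\infty$, and $d:\Sigma\times\Sigma\to\mathbb{R}$. Suppose $\alpha$ and $\beta$ are increasing functions $\Sigma^+\to\mathbb{R}$ such that $\alpha^p,\beta^p\in\Gamma(\Sigma)$, and let $D$ be the $\ell^p$ edit distance on $\Sigma^*$ extending $d$, $\alpha$ and $\beta$. Then $D$ is arbitrarily decomposable of order $p$.
   Context: $\Sigma^*$ is the free monoid on $\Sigma$ (finite words, concatenation, empty word $e$), $\Sigma^+=\Sigma^*\setminus\{e\}$. For $w=w_1\cdots w_n$ write $|w|=n$, $\bar w_k=w_1\cdots w_k$, $\bar w_0=e$. A word $u$ is a factor of $v$ if $v=xuy$ for some $x,y\in\Sigma^*$; $\mathfrak{F}(v)$ is the set of factors of $v$. A gap penalty over $\Sigma^+$ is a positive function $\gamma:\Sigma^+\to\mathbb{R}$ with $\gamma(u)+\gamma(v)\ge\gamma(uv)$ for all $u,v\in\Sigma^+$; $\Gamma(\Sigma)$ is the set of these. A function $\gamma$ is increasing if $\gamma(uxv)\ge\gamma(uv)$ for all $u,v,x\in\Sigma^*$. $\ell^p$ edit distance: for $x,y\in\Sigma^*$, $m=|x|$, $n=|y|$, define recursively $D(e,e)=0$, $D(e,\bar y_j)=\alpha(\bar y_j)$, $D(\bar x_i,e)=\beta(\bar x_i)$, and for $1\le i\le m$, $1\le j\le n$, \[D(\bar x_i,\bar y_j)=\Big(\min\Big\{D^p(\bar x_{i-1},\bar y_{j-1})+d^p(x_i,y_j),\ \min_{1\le k\le j}\{D^p(\bar x_i,\bar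 y_{j-k})+\alpha^p(y_{j-k+1}\cdots y_j)\},\ \min_{1\le k\le i}\{D^p(\bar x_{i-k},\bar y_j)+\beta^p(x_{i-k+1}\cdots x_i)\}\Big\}\Big)^{1/p},\] with $D(x,y)=D(\bar x_m,\bar y_n)$. A function $\rho:\Sigma^*\times\Sigma^*\to\mathbb{R}$ is arbitrarily decomposable of order $p$ if for all $x,y\in\Sigma^*$: (i) for every $y'\in\mathfrak{F}(y)$ there exist $x',x_1^*,x_2^*\in\mathfrak{F}(x)$ with $x=x_1^*x'x_2^*$ and $y_1^*,y_2^*,u,v\in\mathfrak{F}(y)$ with $y=y_1^*uy'vy_2^*$ and $\rho(x,y)\ge(\rho^p(x_1^*,y_1^* )+\rho^p(x',y')+\rho^p(x_2^*,y_2^* ))^{1/p}$; and (ii) for every $x'\in\mathfrak{F}(x)$ there exist $y',y_1^*,y_2^*\in\mathfrak{F}(y)$ with $y=y_1^*y'y_2^*$ and $x_1^*,x_2^*,u,v\in\mathfrak{F}(x)$ with $x=x_1^*ux'vx_2^*$ and $\rho(x,y)\ge(\rho^p(x_1^*,y_1^* )+\rho^p(x',y')+\rho^p(x_2^*,y_2^* ))^{1/p}$. *)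

(* Defs.v *)
From HB Require Import structures.
From mathcomp Require Import all_boot all_order all_algebra.
From mathcomp Require Import all_classical all_reals all_analysis.
Set Implicit Arguments. Unset Strict Implicit. Unset Printing Implicit Defensive.
Import Order.TTheory GRing.Theory Num.Theory.
Local Open Scope ring_scope.

Section EditDistance.
Context {R : realType} {Sigma : Type}.

(* Real power x^r.  For x >= 0 this is the usual x^r (powR);
   for x < 0 we use the odd (sign-preserving) extension -( (-x)^r ),
   so that for r = 1 it is the identity on all of R. *)
Definition ppow (r x : R) : R :=
  if 0 <= x then powR x r else - powR (- x) r.

Definition factor (u v : seq Sigma) : Prop := exists a b, v = a ++ u ++ b.

(* gap penalty over Sigma^+ (values at the empty word are irrelevant) *)
Definition is_gap_penalty (g : seq Sigma -> R) : Prop :=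
  (forall u, u <> [::] -> 0 < g u) /\
  (forall u v, u <> [::] -> v <> [::] -> g (u ++ v) <= g u + g v).

Definition increasing_gap (g : seq Sigma -> R) : Prop :=
  forall u v x, u ++ v <> [::] -> g (u ++ v) <= g (u ++ x ++ v).

(* The l^p edit distance, via its recursion on prefixes.
   For x = x_1..x_m, y = y_1..y_n (both nonempty):
   D(x,y) = ( min { D^p(x_1..x_{m-1}, y_1..y_{n-1}) + d^p(x_m,y_n),
                    min_{1<=k<=n} D^p(x, y_1..y_{n-k}) + alpha^p(y_{n-k+1}..y_n),
                    min_{1<=k<=m} D^p(x_1..x_{m-k}, y) + beta^p(x_{m-k+1}..x_m) } )^(1/p).
   [fuel] only ensures termination; it is always sufficient below. *)
Fixpoint lp_edit_aux (p : R) (d : Sigma -> Sigma -> R) (alpha beta : seq Sigma -> R)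
    (fuel : nat) (x y : seq Sigma) : R :=
  match fuel with
  | 0%N => 0
  | S f =>
    match x, y with
    | [::], [::] => 0
    | [::], _ => alpha y
    | _, [::] => beta x
    | a :: x', b :: y' =>
      let m := size x in let n := size y in
      let Dp u v := ppow p (lp_edit_aux p d alpha beta f u v) in
      let c1 := Dp (take m.-1 x) (take n.-1 y) + ppow p (d (last a x') (last b y')) in
      let c2 := [seq Dp x (take (n - k) y) + ppow p (alpha (drop (n - k) y))
                | k <- iota 1 n] in
      let c3 := [seq Dp (take (m - k) x) y + ppow p (beta (drop (m - k) x))
                | k <- iota 1 m] in
      ppow (1 / p) (foldr Num.min c1 (c2 ++ c3))
    end
  end.

Definition lp_edit (p : R) (d : Sigma -> Sigma -> R) (alpha beta : seq Sigma -> R)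
    (x y : seq Sigma) : R :=
  lp_edit_aux p d alpha beta (size x + size y).+1 x y.

Definition arb_decomposable (p : R) (rho : seq Sigma -> seq Sigma -> R) : Prop :=
  forall x y : seq Sigma,
    (forall y', factor y' y ->
       exists x' x1 x2 y1 y2 u v,
         [/\ factor x' x, factor x1 x, factor x2 x & x = x1 ++ x' ++ x2] /\
         [/\ factor y1 y, factor y2 y, factor u y, factor v y &
             y = y1 ++ u ++ y' ++ v ++ y2] /\
         ppow (1 / p) (ppow p (rho x1 y1) + ppow p (rho x' y') + ppow p (rho x2 y2))
           <= rho x y) /\
    (forall x', factor x' x ->
       exists y' y1 y2 x1 x2 u v,
         [/\ factor y' y, factor y1 y, factor y2 y & y = y1 ++ y' ++ y2] /\
         [/\ factor x1 x, factor x2 x, factor u x, factor v x &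
             x = x1 ++ u ++ x' ++ v ++ x2] /\
         ppow (1 / p) (ppow p (rho x1 y1) + ppow p (rho x' y') + ppow p (rho x2 y2))
           <= rho x y).

End EditDistance.

(* Main.v *)
Require Import Defs.
From HB Require Import structures.
From mathcomp Require Import all_boot all_order all_algebra.
From mathcomp Require Import all_classical all_reals all_analysis.
From mathcomp Require Import lra zify.
Import Order.TTheory GRing.Theory Num.Theory.
Local Open Scope ring_scope.

Lemma ppow_comp (R : realType) (r s z : R) : r * s = 1 ->
  ppow s (ppow r z) = z.
Proof.
move=> rs; rewrite /ppow; have [z0|z0] := boolP (0 <= z).
  by rewrite ifT ?powR_ge0 // -powRrM rs powRr1.
have zn : 0 < - z by rewrite oppr_gt0 ltNge.
have hp : 0 < powR (- z) r by apply: powR_gt0.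
rewrite ifF; last by apply/negbTE; rewrite -ltNge oppr_lt0.
by rewrite opprK -powRrM rs powRr1 ?opprK // ltW.
Qed.

Lemma ppow_mono (R : realType) (r x y : R) : 0 <= r -> x <= y -> ppow r x <= ppow r y.
Proof.
move=> r0 xy; rewrite /ppow; have [x0|x0] := boolP (0 <= x);
  have [y0|y0] := boolP (0 <= y).
- by apply: ge0_ler_powR.
- by exfalso; move: y0; rewrite (le_trans x0 xy).
- by apply: (le_trans (y := 0)); rewrite ?oppr_le0 powR_ge0.
- rewrite lerN2; apply: ge0_ler_powR => //.
  + by rewrite nnegrE oppr_ge0 ltW // ltNge.
  + by rewrite nnegrE oppr_ge0 ltW // ltNge.
  + by rewrite lerN2.
Qed.

Set Implicit Arguments. Unset Strict Implicit. Unset Printing Implicit Defensive.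

Record gapok (R : realType) (S : Type) (A : seq S -> R) : Prop := GapOk {
  g_inc : forall u v w, u ++ v <> [::] -> A (u ++ v) <= A (u ++ w ++ v);
  g_sub : forall u v, u <> [::] -> v <> [::] -> A (u ++ v) <= A u + A v }.

Record spec (R : realType) (S : Type) (E : seq S -> seq S -> R)
  (A B : seq S -> R) (c : S -> S -> R) : Prop := Spec {
  s0 : E [::] [::] = 0;
  sA : forall y, y <> [::] -> E [::] y = A y;
  sB : forall x, x <> [::] -> E x [::] = B x;
  scase : forall x y, x <> [::] -> y <> [::] ->
     (exists x0 y0 a b, [/\ x = rcons x0 a, y = rcons y0 b & E x0 y0 + c a b <= E x y]) \/
     (exists y0 t, [/\ t <> [::], y = y0 ++ t & E x y0 + A t <= E x y]) \/
     (exists x0 s, [/\ s <> [::], x = x0 ++ s & E x0 y + B s <= E x y]);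
  sup1 : forall x0 y0 a b, E (rcons x0 a) (rcons y0 b) <= E x0 y0 + c a b;
  sup2 : forall x y t, x <> [::] -> t <> [::] -> E x (y ++ t) <= E x y + A t;
  sup3 : forall x y s, y <> [::] -> s <> [::] -> E (x ++ s) y <= E x y + B s;
  sgA : @gapok R S A;
  sgB : @gapok R S B }.

Lemma spec_flip (R : realType) (S : Type) E A B c :
  @spec R S E A B c -> spec (fun u v => E v u) B A (fun a b => c b a).
Proof.
case=> h0 hA hB hc h1 h2 h3 gA gB; split => //.
move=> x y xn yn; case: (hc y x yn xn) => [[x0 [y0 [a [b [e1 e2 e3]]]]]|[[y0 [t [e1 e2 e3]]]|[x0 [s [e1 e2 e3]]]]].
- by left; exists y0, x0, b, a.
- by right; right; exists y0, t.
- by right; left; exists x0, s.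
- by move=> x y t xn tn; apply: h3.
- by move=> x y t xn tn; apply: h2.
Qed.

Lemma cat_eq_cases (S : Type) (a b c d : seq S) : a ++ b = c ++ d ->
  (exists m, b = m ++ d /\ c = a ++ m) \/
  (exists w, [/\ w <> [::], a = c ++ w & d = w ++ b]).
Proof.
elim: a c => [|h a IH] c /=.
  by move=> ->; left; exists c.
case: c => [|h' c] /=.
  by move=> <-; right; exists (h :: a).
case=> <- /IH [[m [e1 e2]]|[w [w0 e1 e2]]].
- by left; exists m; rewrite e2.
- by right; exists w; rewrite e1.
Qed.

Section S.
Variables (R : realType) (S : Type) (E : seq S -> seq S -> R) (A B : seq S -> R) (c : S -> S -> R).
Hypothesis sp : spec E A B c.

Lemma app_y x y t : t <> [::] -> E x (y ++ t) <= E x y + A t.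
Proof.
move=> tn; case: x => [|a x]; last by apply: (sup2 sp).
case: y => [|b y].
  by rewrite cat0s (sA sp) // (s0 sp) add0r.
rewrite !(sA sp) //; first exact: (g_sub (sgA sp)).

Qed.

Lemma app_x x y s : s <> [::] -> E (x ++ s) y <= E x y + B s.
Proof.
move=> sn; case: y => [|a y]; last by apply: (sup3 sp).
case: x => [|b x].
  by rewrite cat0s (sB sp) // (s0 sp) add0r.
rewrite !(sB sp) //; first exact: (g_sub (sgB sp)).

Qed.


Lemma nil_or (s : seq S) : s = [::] \/ s <> [::].
Proof. by case: s; [left|right]. Qed.

Lemma cat_neq0r (u v : seq S) : v <> [::] -> u ++ v <> [::].
Proof. by case: u => // _ ->. Qed.

Lemma gincl (w yb : seq S) : yb <> [::] -> A yb <= A (w ++ yb).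
Proof. by move=> h; have := g_inc (sgA sp) w (h : [::] ++ yb <> [::]); rewrite !cat0s. Qed.

Lemma gincr (ya yb : seq S) : ya <> [::] -> A ya <= A (ya ++ yb).
Proof.
move=> h; have hh : ya ++ [::] <> [::] by rewrite cats0.
by have := g_inc (sgA sp) yb hh; rewrite !cats0.
Qed.

Lemma splitL n : forall x y ya yb, (size x + size y < n)%N -> y = ya ++ yb ->
  exists xa xb ya' u, [/\ x = xa ++ xb, ya = ya' ++ u & E xa ya' + E xb yb <= E x y].
Proof.
elim: n => [//|n IH] x y ya yb hs ey.
have [ybe|ybn] := nil_or yb.
  by exists x, [::], ya, [::]; rewrite ybe !cats0 (s0 sp) addr0 ey ybe cats0.
have [yae|yan] := nil_or ya.
  by exists [::], x, [::], [::]; rewrite (s0 sp) add0r ey yae.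
have yn : y <> [::] by rewrite ey; apply: cat_neq0r.
have [xe|xn] := nil_or x.
  exists [::], [::], [::], ya; rewrite xe (s0 sp) add0r !(sA sp) // ey; split => //.
  exact: gincl.
case: (scase sp xn yn) => [[x0 [y0 [a [b [e1 e2 h]]]]]|[[y0 [t [tn e2 h]]]|[x0 [s [sn e1 h]]]]].
- case/lastP: yb ybn ey => [//|yb0 b'] _ ey.
  have : rcons y0 b = rcons (ya ++ yb0) b' by rewrite -e2 ey rcons_cat.
  case/rcons_inj => ey0 eb.
  have hs' : (size x0 + size y0 < n)%N by move: hs; rewrite e1 e2 !size_rcons; lia.
  have [xa [xb' [ya' [u [ex0 eya h']]]]] := IH x0 y0 ya yb0 hs' ey0.
  exists xa, (rcons xb' a), ya', u; split => //; first by rewrite e1 ex0 rcons_cat.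
  have := sup1 sp xb' yb0 a b; rewrite eb => h1.
  rewrite eb in h; lra.
- have : ya ++ yb = y0 ++ t by rewrite -ey.
  case/cat_eq_cases => [[m [eyb ey0]]|[w [wn eya et]]].
  + have hs' : (size x + size y0 < n)%N.
      move: hs; rewrite e2 size_cat; case: t tn {h e2 eyb} => [//|t0 ts] _ /=; lia.
    have [xa [xb [ya' [u [ex eya h']]]]] := IH x y0 ya m hs' ey0.
    exists xa, xb, ya', u; split => //.
    have := app_y xb m tn; rewrite -eyb => h1; lra.
  + exists x, [::], y0, w; rewrite cats0; split => //.
    rewrite (sA sp) //; have := gincl w ybn; rewrite -et => h1; lra.
- have hs' : (size x0 + size y < n)%N.
    move: hs; rewrite e1 size_cat; case: s sn {h e1} => [//|t0 ts] _ /=; lia.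
  have [xa [xb' [ya' [u [ex0 eya h']]]]] := IH x0 y ya yb hs' ey.
  exists xa, (xb' ++ s), ya', u; split => //; first by rewrite e1 ex0 catA.
  have := app_x xb' yb sn => h1; lra.
Qed.

Lemma splitR n : forall x y ya yb, (size x + size y < n)%N -> y = ya ++ yb ->
  exists xa xb v yb', [/\ x = xa ++ xb, yb = v ++ yb' & E xa ya + E xb yb' <= E x y].
Proof.
elim: n => [//|n IH] x y ya yb hs ey.
have [ybe|ybn] := nil_or yb.
  by exists x, [::], [::], [::]; rewrite ybe !cats0 (s0 sp) addr0 ey ybe cats0.
have [yae|yan] := nil_or ya.
  by exists [::], x, [::], yb; rewrite ey yae (s0 sp) add0r.
have yn : y <> [::] by rewrite ey; apply: cat_neq0r.
have [xe|xn] := nil_or x.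
  exists [::], [::], yb, [::]; rewrite xe (s0 sp) addr0 !(sA sp) // ey cats0; split => //.
  by rewrite cats0. exact: gincr.
case: (scase sp xn yn) => [[x0 [y0 [a [b [e1 e2 h]]]]]|[[y0 [t [tn e2 h]]]|[x0 [s [sn e1 h]]]]].
- case/lastP: yb ybn ey => [//|yb0 b'] _ ey.
  have : rcons y0 b = rcons (ya ++ yb0) b' by rewrite -e2 ey rcons_cat.
  case/rcons_inj => ey0 eb.
  have hs' : (size x0 + size y0 < n)%N by move: hs; rewrite e1 e2 !size_rcons; lia.
  have [xa [xb' [v [yb'' [ex0 eyb h']]]]] := IH x0 y0 ya yb0 hs' ey0.
  exists xa, (rcons xb' a), v, (rcons yb'' b); split => //.
  + by rewrite e1 ex0 rcons_cat.
  + by rewrite eyb rcons_cat eb.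
  have := sup1 sp xb' yb'' a b => h1; lra.
- have : ya ++ yb = y0 ++ t by rewrite -ey.
  case/cat_eq_cases => [[m [eyb ey0]]|[w [wn eya et]]].
  + have hs' : (size x + size y0 < n)%N.
      move: hs; rewrite e2 size_cat; case: t tn {h e2 eyb} => [//|t0 ts] _ /=; lia.
    have [xa [xb [v [yb'' [ex em h']]]]] := IH x y0 ya m hs' ey0.
    exists xa, xb, v, (yb'' ++ t); split => //; first by rewrite eyb em catA.
    have := app_y xb yb'' tn => h1; lra.
  + exists x, [::], yb, [::]; rewrite !cats0; split => //.
    rewrite (s0 sp) addr0 eya; have := app_y x y0 wn; have := gincr yb wn.
    rewrite -et => h1 h2; lra.
- have hs' : (size x0 + size y < n)%N.
    move: hs; rewrite e1 size_cat; case: s sn {h e1} => [//|t0 ts] _ /=; lia.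
  have [xa [xb' [v [yb' [ex0 eyb h']]]]] := IH x0 y ya yb hs' ey.
  exists xa, (xb' ++ s), v, yb'; split => //; first by rewrite e1 ex0 catA.
  have := app_x xb' yb' sn => h1; lra.
Qed.

End S.

Set Implicit Arguments. Unset Strict Implicit. Unset Printing Implicit Defensive.

Section T.
Variables (R : realType) (S : Type) (p : R) (d : S -> S -> R) (alpha beta : seq S -> R).

Local Notation aux := (lp_edit_aux p d alpha beta).
Local Notation D := (lp_edit p d alpha beta).

Definition M (F : seq S -> seq S -> R) (a : S) (x' : seq S) (b : S) (y' : seq S) : R :=
  let x := a :: x' in let y := b :: y' in let m := size x in let n := size y in
  foldr Num.min (F (take m.-1 x) (take n.-1 y) + ppow p (d (last a x') (last b y')))
   ([seq F x (take (n - k) y) + ppow p (alpha (drop (n - k) y)) | k <- iota 1 n] ++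
    [seq F (take (m - k) x) y + ppow p (beta (drop (m - k) x)) | k <- iota 1 m]).

Lemma unfold_aux f a x' b y' :
  aux f.+1 (a :: x') (b :: y') = ppow (1 / p) (M (fun u v => ppow p (aux f u v)) a x' b y').
Proof. by []. Qed.

Lemma size_take_le (T : Type) n (s : seq T) : (size (take n s) <= n)%N.
Proof. by rewrite size_take_min geq_minl. Qed.

Lemma M_ext F G a x' b y' :
  (forall u v, (size u + size v < (size x').+1 + (size y').+1)%N -> F u v = G u v) ->
  M F a x' b y' = M G a x' b y'.
Proof.
move=> FG; rewrite /M; cbv zeta; congr (foldr _ (_ + _) (_ ++ _)).
- apply: FG => /=; have := size_take_le (size x') (a :: x');
  have := size_take_le (size y') (b :: y'); lia.
- apply/eq_in_map => k; rewrite mem_iota => /andP[k1 k2]; congr (_ + _).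
  apply: FG => /=; have := size_take_le ((size y').+1 - k) (b :: y'); move: k1 k2 => /=; lia.
- apply/eq_in_map => k; rewrite mem_iota => /andP[k1 k2]; congr (_ + _).
  apply: FG => /=; have := size_take_le ((size x').+1 - k) (a :: x'); move: k1 k2 => /=; lia.
Qed.


Lemma aux_fuel f : forall g x y, (size x + size y < f)%N -> (size x + size y < g)%N ->
  aux f x y = aux g x y.
Proof.
elim: f => [//|f IH] [//|g] x y h1 h2.
case: x h1 h2 => [|a x] h1 h2; case: y h1 h2 => [|b y] h1 h2.
- by [].
- by [].
- by [].
rewrite (unfold_aux f) (unfold_aux g); congr (ppow _ _); apply: M_ext => u v huv.
rewrite (IH g) //.
  by move: h1 huv => /=; lia.
by move: h2 huv => /=; lia.
Qed.

Lemma D_fuel f x y : (size x + size y < f)%N -> aux f x y = D x y.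
Proof. by move=> h; rewrite /lp_edit; apply: aux_fuel. Qed.

Definition E x y := ppow p (D x y).

Hypothesis p1 : 1 <= p.

Lemma p0 : 0 < p.
Proof. exact: (lt_le_trans ltr01 p1). Qed.

Lemma D_cons a x' b y' : E (a :: x') (b :: y') = M E a x' b y'.
Proof.
rewrite /E {1}/lp_edit unfold_aux ppow_comp; last by rewrite mul1r mulVf // gt_eqF // p0.
apply: M_ext => u v huv; rewrite D_fuel //.
Qed.

Lemma fmin_le (c : R) (l : seq R) : foldr Num.min c l <= c /\ forall z, z \in l -> foldr Num.min c l <= z.
Proof.
elim: l => [|h l [IH1 IH2]] /=; split => //.
- by rewrite ge_min IH1 orbT.
- move=> z; rewrite inE => /orP[/eqP ->|zl]; rewrite ge_min ?lexx //.
  by rewrite IH2 ?orbT.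
Qed.

Lemma fmin_mem (c : R) (l : seq R) : foldr Num.min c l \in c :: l.
Proof.
elim: l => [|h l IH] /=; first by rewrite inE.
rewrite minEle; case: ifP => _; first by rewrite !inE eqxx orbT.
move: IH; rewrite !inE => /orP[->|->] //; by rewrite !orbT.
Qed.

Lemma cons_of (T : Type) (x : seq T) : x <> [::] -> exists h tl, x = h :: tl.
Proof. by case: x => [/(_ erefl)[]|h tl _]; exists h, tl. Qed.

Lemma rcons_cons_ex (T : Type) (x0 : seq T) a : exists h tl, rcons x0 a = h :: tl.
Proof. by apply: cons_of; case: x0. Qed.

Lemma take_last_rcons (T : Type) (x0 : seq T) a h tl : rcons x0 a = h :: tl ->
  take (size (h :: tl)).-1 (h :: tl) = x0 /\ last h tl = a.
Proof.
move=> ex; split.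
  by rewrite -ex size_rcons /= -cats1 take_size_cat.
by rewrite -(last_rcons h x0 a) ex.
Qed.

Lemma take_last_cons (T : Type) (h : T) tl :
  h :: tl = rcons (take (size (h :: tl)).-1 (h :: tl)) (last h tl).
Proof. by have [-> _] := take_last_rcons (esym (lastI h tl)); exact: lastI. Qed.

Lemma drop_neq0 (T : Type) i (s : seq T) : (i < size s)%N -> drop i s <> [::].
Proof. by move=> h e; move: (size_drop i s); rewrite e /=; lia. Qed.

Lemma E_spec : increasing_gap alpha -> increasing_gap beta ->
  is_gap_penalty (fun u => ppow p (alpha u)) ->
  is_gap_penalty (fun u => ppow p (beta u)) ->
  spec E (fun u => ppow p (alpha u)) (fun u => ppow p (beta u)) (fun a b => ppow p (d a b)).
Proof.
move=> ia ib [_ ga] [_ gb]; split.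
- rewrite /E /lp_edit /= /ppow lexx powR0 //; exact: lt0r_neq0 p0.
- by move=> y /cons_of [h [tl ->]].
- by move=> x /cons_of [h [tl ->]].
- move=> x y /cons_of [a [x' ->]] /cons_of [b [y' ->]].
  rewrite D_cons /M; cbv zeta.
  set c1 := (X in foldr _ X _); set l := (X in foldr _ _ X).
  have := fmin_mem c1 l; rewrite inE mem_cat => /orP[/eqP e|/orP[/mapP[k hk e]|/mapP[k hk e]]].
  + left; exists (take (size (a :: x')).-1 (a :: x')), (take (size (b :: y')).-1 (b :: y')),
      (last a x'), (last b y'); split; try exact: take_last_cons.
    by rewrite e lexx.
  + right; left; exists (take (size (b :: y') - k) (b :: y')), (drop (size (b :: y') - k) (b :: y')).
    move: hk; rewrite mem_iota => /andP[k1 k2].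
    split; first (apply: drop_neq0; move: k1 k2 => /=; lia).
    * by rewrite cat_take_drop.
    * by rewrite e lexx.
  + right; right; exists (take (size (a :: x') - k) (a :: x')), (drop (size (a :: x') - k) (a :: x')).
    move: hk; rewrite mem_iota => /andP[k1 k2].
    split; first (apply: drop_neq0; move: k1 k2 => /=; lia).
    * by rewrite cat_take_drop.
    * by rewrite e lexx.
- move=> x0 y0 a b; have [h [tl ex]] := rcons_cons_ex x0 a.
  have [h' [tl' ey]] := rcons_cons_ex y0 b.
  rewrite ex ey D_cons /M; cbv zeta.
  apply: le_trans (fmin_le _ _).1 _.
  have [-> ->] := take_last_rcons ex; have [-> ->] := take_last_rcons ey.
  exact: lexx.
- move=> x y t /cons_of [h [tl ->]] tn.
  have [h' [tl' ey]] : exists h' tl', y ++ t = h' :: tl'.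
    by apply: cons_of; case: y => //=; case: t tn.
  rewrite ey D_cons /M; cbv zeta.
  set c1 := (X in foldr _ X _); set l := (X in foldr _ _ X).
  have hz : E (h :: tl) y + ppow p (alpha t) \in l.
    rewrite mem_cat; apply/orP; left; apply/mapP; exists (size t).
      rewrite mem_iota -ey size_cat; case: t tn {ey} => [//|t0 ts] _ /=; lia.
    by rewrite -ey size_cat addnK take_size_cat // drop_size_cat.
  exact: (fmin_le c1 l).2 _ hz.
- move=> x y s /cons_of [h' [tl' ->]] sn.
  have [h [tl ex]] : exists h tl, x ++ s = h :: tl.
    by apply: cons_of; case: x => //=; case: s sn.
  rewrite ex D_cons /M; cbv zeta.
  set c1 := (X in foldr _ X _); set l := (X in foldr _ _ X).
  have hz : E x (h' :: tl') + ppow p (beta s) \in l.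
    rewrite mem_cat; apply/orP; right; apply/mapP; exists (size s).
      rewrite mem_iota -ex size_cat; case: s sn {ex} => [//|t0 ts] _ /=; lia.
    by rewrite -ex size_cat addnK take_size_cat // drop_size_cat.
  exact: (fmin_le c1 l).2 _ hz.
- split => // u v w h; apply: ppow_mono; [exact: ltW p0 | exact: ia].
- split => // u v w h; apply: ppow_mono; [exact: ltW p0 | exact: ib].
Qed.

End T.

Unset Implicit Arguments.

Theorem lemma3p17 (R : realType) (Sigma : Type) (p : R)
  (d : Sigma -> Sigma -> R) (alpha beta : seq Sigma -> R) :
  1 <= p ->
  increasing_gap alpha -> increasing_gap beta ->
  is_gap_penalty (fun u => ppow p (alpha u)) ->
  is_gap_penalty (fun u => ppow p (beta u)) ->
  arb_decomposable p (lp_edit p d alpha beta).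
Proof.
move=> p1 ia ib ga gb.
have sp := E_spec d p1 ia ib ga gb.
have sp' := spec_flip sp.
have pp : 0 < p := p0 p1.
have pK : p * (1 / p) = 1 by rewrite mul1r mulfV // gt_eqF.
move=> x y; split.
- move=> y' [a [b ey]].
  have [xa [xb [ya' [u [ex ea h1]]]]] := splitL sp (ltnSn (size x + size y)) ey.
  have [x' [x2 [v [y2 [exb eb h2]]]]] := splitR sp (ltnSn (size xb + size (y' ++ b))) (erefl (y' ++ b)).
  exists x', xa, x2, ya', y2, u, v; split; [split|split; [split|]].
  + by exists xa, x2; rewrite ex exb.
  + by exists [::], (x' ++ x2); rewrite ex exb.
  + by exists (xa ++ x'), [::]; rewrite ex exb cats0 catA.
  + by rewrite ex exb.
  + by exists [::], (u ++ y' ++ v ++ y2); rewrite ey ea eb !catA.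
  + by exists (ya' ++ u ++ y' ++ v), [::]; rewrite ey ea eb !catA cats0.
  + by exists ya', (y' ++ v ++ y2); rewrite ey ea eb !catA.
  + by exists (ya' ++ u ++ y'), y2; rewrite ey ea eb !catA.
  + by rewrite ey ea eb !catA.
  + rewrite -[X in _ <= X](@ppow_comp R p (1 / p) (lp_edit p d alpha beta x y) pK).
    apply: ppow_mono; first by rewrite divr_ge0 // ltW.
    move: h1 h2; rewrite /E; lra.
- move=> x' [a [b ex]].
  have [ya [yb [x1 [u [ey ea h1]]]]] := splitL sp' (ltnSn (size y + size x)) ex.
  have [y' [y2 [v [x2 [eyb eb h2]]]]] := splitR sp' (ltnSn (size yb + size (x' ++ b))) (erefl (x' ++ b)).
  cbv beta in h1; cbv beta in h2.
  exists y', ya, y2, x1, x2, u, v; split; [split|split; [split|]].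
  + by exists ya, y2; rewrite ey eyb.
  + by exists [::], (y' ++ y2); rewrite ey eyb.
  + by exists (ya ++ y'), [::]; rewrite ey eyb cats0 catA.
  + by rewrite ey eyb.
  + by exists [::], (u ++ x' ++ v ++ x2); rewrite ex ea eb !catA.
  + by exists (x1 ++ u ++ x' ++ v), [::]; rewrite ex ea eb !catA cats0.
  + by exists x1, (x' ++ v ++ x2); rewrite ex ea eb !catA.
  + by exists (x1 ++ u ++ x'), x2; rewrite ex ea eb !catA.
  + by rewrite ex ea eb !catA.
  + rewrite -[X in _ <= X](@ppow_comp R p (1 / p) (lp_edit p d alpha beta x y) pK).
    apply: ppow_mono; first by rewrite divr_ge0 // ltW.
    move: h1 h2; rewrite /E; lra.
Qed.
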